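(* For every $b\in[0,1]$, $\displaystyle\limsup_{W\ni z\to1}X_b(z)=0$.
   Context: $\mathbb H=\{\operatorname{Im}z>0\}$, $W=\{z\in\mathbb H:0<\operatorname{Re}z<1,\ |z|>1\}$. $\operatorname e(z)=e^{2\pi iz}$, $\eta(z)=\operatorname e(z/6)\prod_{n\ge1}(1-\operatorname e(nz))^4$, $f_1(z)=\log|\operatorname{Im}(z)\eta(z)|$, $f_0(z)=\log|\operatorname{Im}(\frac{z+1}2)\eta(\frac{z+1}2)|$, $f_b=bf_1+(1-b)f_0$; with $z=x+iy$, $X_b=\partial f_b/\partial x$. *)

(* Defs.v *)
From Stdlib Require Import Reals ClassicalEpsilon.
Open Scope R_scope.

Definition C : Type := (R * R)%type.
Definition Cre (z : C) : R := fst z.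
Definition Cim (z : C) : R := snd z.
Definition C0 : C := (0, 0).
Definition C1 : C := (1, 0).
Definition Cadd (z w : C) : C := (Cre z + Cre w, Cim z + Cim w).
Definition Copp (z : C) : C := (- Cre z, - Cim z).
Definition Csub (z w : C) : C := Cadd z (Copp w).
Definition Cmul (z w : C) : C :=
  (Cre z * Cre w - Cim z * Cim w, Cre z * Cim w + Cim z * Cre w).
Definition Cscal (r : R) (z : C) : C := (r * Cre z, r * Cim z).
Fixpoint Cpow (z : C) (n : nat) : C :=
  match n with O => C1 | S m => Cmul z (Cpow z m) end.
Definition Cmod (z : C) : R := sqrt (Cre z ^ 2 + Cim z ^ 2).

Definition Cexp (z : C) : C := (exp (Cre z) * cos (Cim z), exp (Cre z) * sin (Cim z)).

Definition ee (z : C) : C := Cexp (Cmul (0, 2 * PI) z).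

Definition Ccv (u : nat -> C) (l : C) : Prop :=
  forall eps, eps > 0 -> exists N : nat, forall n, (n >= N)%nat -> Cmod (Csub (u n) l) < eps.
Definition Clim (u : nat -> C) : C := epsilon (inhabits C0) (fun l => Ccv u l).

Fixpoint eta_partial (z : C) (N : nat) : C :=
  match N with
  | O => C1
  | S M => Cmul (eta_partial z M) (Cpow (Csub C1 (ee (Cscal (INR (S M)) z))) 4)
  end.

Definition eta (z : C) : C := Cmul (ee (Cscal (/ 6) z)) (Clim (eta_partial z)).

Definition f1 (x y : R) : R := ln (Cmod (Cscal y (eta (x, y)))).
Definition f0 (x y : R) : R := f1 ((x + 1) / 2) (y / 2).
Definition fb (b x y : R) : R := b * f1 x y + (1 - b) * f0 x y.

Definition inW (x y : R) : Prop := 0 < y /\ 0 < x < 1 /\ sqrt (x ^ 2 + y ^ 2) > 1.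

(* Main.v *)
Require Import Defs.
From Stdlib Require Import Reals Lra Lia Psatz ClassicalEpsilon FunctionalExtensionality.
From Stdlib Require Import Ranalysis5.
From Coquelicot Require Complex.
From Coquelicot Require Coquelicot.
Open Scope R_scope.

Lemma exp_nat k c : exp (INR k * c) = exp c ^ k.
Proof.
  induction k. simpl. rewrite Rmult_0_l; apply exp_0.
  rewrite S_INR, Rmult_plus_distr_r, Rmult_1_l, exp_plus, IHk; simpl; ring.
Qed.

Definition sy (y : R) := exp (-(PI*y/2)).
Definition rho (n : nat) (y : R) := sy y ^ (4*n).
Definition Dn (n : nat) (x y : R) := 1 - 2 * rho n y * cos (2*PI*INR n*x) + rho n y ^ 2.

Lemma ee_val n x y : ee (Cscal (INR n) (x,y)) =
  (rho n y * cos (2*PI*INR n*x), rho n y * sin (2*PI*INR n*x)).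
Proof.
  unfold ee, Cexp, Cmul, Cscal, Cre, Cim, rho, sy; cbn [fst snd].
  rewrite <- exp_nat, mult_INR.
  replace (INR 4) with 4 by (simpl; ring).
  f_equal; f_equal; try (f_equal; ring); f_equal; field.
Qed.

Lemma Cmod_sq z : Cmod z ^ 2 = Cre z ^ 2 + Cim z ^ 2.
Proof. unfold Cmod. rewrite pow2_sqrt; [auto | nra]. Qed.

Lemma Cmod_w n x y : Cmod (Csub Defs.C1 (ee (Cscal (INR n) (x,y)))) ^ 2 = Dn n x y.
Proof.
  rewrite Cmod_sq, ee_val. unfold Csub, Cadd, Copp, Defs.C1, Cre, Cim, Dn; simpl.
  pose proof (sin2_cos2 (2*PI*INR n*x)). unfold Rsqr in H.
  nra.
Qed.

Lemma Cmod_mul a b : Cmod (Cmul a b) = Cmod a * Cmod b.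
Proof. exact (Complex.Cmod_mult a b). Qed.
Lemma Cmod_add a b : Cmod (Cadd a b) <= Cmod a + Cmod b.
Proof. exact (Complex.Cmod_triangle a b). Qed.
Lemma Cmod_opp a : Cmod (Copp a) = Cmod a.
Proof. exact (Complex.Cmod_opp a). Qed.
Lemma Cmod_ge0 a : 0 <= Cmod a.
Proof. apply sqrt_pos. Qed.
Lemma Cmod_C1 : Cmod Defs.C1 = 1.
Proof. unfold Cmod, Defs.C1; simpl. replace (1*(1*1)+0*(0*1)) with 1 by ring. apply sqrt_1. Qed.
Lemma Cmod_fst a : Rabs (Cre a) <= Cmod a.
Proof. unfold Cmod. rewrite <- sqrt_Rsqr_abs. apply sqrt_le_1_alt. unfold Rsqr, Cre, Cim; simpl. nra. Qed.
Lemma Cmod_snd a : Rabs (Cim a) <= Cmod a.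
Proof. unfold Cmod. rewrite <- sqrt_Rsqr_abs. apply sqrt_le_1_alt. unfold Rsqr, Cre, Cim; simpl. nra. Qed.
Lemma Cmod_pow w n : Cmod (Cpow w n) = Cmod w ^ n.
Proof. induction n; simpl. apply Cmod_C1. rewrite Cmod_mul, IHn; auto. Qed.
Lemma Cmod_scal r z : Cmod (Cscal r z) = Rabs r * Cmod z.
Proof.
  unfold Cmod, Cscal, Cre, Cim; simpl.
  rewrite <- sqrt_Rsqr_abs, <- sqrt_mult_alt. f_equal. unfold Rsqr; ring.
  unfold Rsqr; nra.
Qed.
Lemma Cmod_exp z : Cmod (Cexp z) = exp (Cre z).
Proof.
  unfold Cmod, Cexp; simpl.
  pose proof (sin2_cos2 (Cim z)). unfold Rsqr in H.
  replace (exp (Cre z) * cos (Cim z) * (exp (Cre z) * cos (Cim z) * 1) +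
     exp (Cre z) * sin (Cim z) * (exp (Cre z) * sin (Cim z) * 1)) with (exp (Cre z) * exp (Cre z)) by nra.
  apply sqrt_square. left; apply exp_pos.
Qed.

Lemma sy_pos y : 0 < sy y.
Proof. apply exp_pos. Qed.
Lemma sy_lt1 y : 0 < y -> sy y < 1.
Proof. intro. unfold sy. rewrite <- exp_0. apply exp_increasing. pose proof PI_RGT_0. nra. Qed.

Lemma pow_le1 r n : 0 <= r <= 1 -> r ^ n <= 1.
Proof. intro. rewrite <- (pow1 n). apply pow_incr. lra. Qed.
Lemma pow_mono r a b : 0 <= r <= 1 -> (a <= b)%nat -> r ^ b <= r ^ a.
Proof.
  intros H Hab. replace b with (a + (b - a))%nat by lia. rewrite pow_add.
  pose proof (pow_le1 r (b-a) H). pose proof (pow_le r a (proj1 H)). nra.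
Qed.

Lemma rho_pos n y : 0 < rho n y.
Proof. apply pow_lt, sy_pos. Qed.
Lemma rho_le k y : 0 < y -> rho (S k) y <= sy y ^ (S k).
Proof.
  intro. unfold rho. apply pow_mono. pose proof (sy_pos y); pose proof (sy_lt1 y H); lra. lia.
Qed.
Lemma rho_le2 k y : 0 < y -> rho (S k) y <= sy y ^ (S k) * sy y ^ (S k).
Proof.
  intro. unfold rho. rewrite <- pow_add. apply pow_mono. pose proof (sy_pos y); pose proof (sy_lt1 y H); lra. lia.
Qed.
Lemma rho_lt1 k y : 0 < y -> rho (S k) y <= sy y.
Proof.
  intro. eapply Rle_trans. apply rho_le; auto. rewrite <- (pow_1 (sy y)) at 2. apply pow_mono.
  pose proof (sy_pos y); pose proof (sy_lt1 y H); lra. lia.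
Qed.

Lemma Dn_bounds n x y : (1 - rho n y)^2 <= Dn n x y <= (1 + rho n y)^2.
Proof.
  unfold Dn. pose proof (rho_pos n y). pose proof (COS_bound (2*PI*INR n*x)). nra.
Qed.

Lemma Dn_pos k x y : 0 < y -> 0 < Dn (S k) x y.
Proof.
  intro. pose proof (Dn_bounds (S k) x y). pose proof (rho_lt1 k y H). pose proof (sy_lt1 y H). nra.
Qed.

Lemma ln_le_sub1 x : 0 < x -> ln x <= x - 1.
Proof. intro. pose proof (exp_ineq1_le (ln x)). rewrite exp_ln in H0; lra. Qed.
Lemma ln_ge x : 0 < x -> 1 - / x <= ln x.
Proof.
  intro. pose proof (ln_le_sub1 (/x) (Rinv_0_lt_compat _ H)). rewrite ln_Rinv in H0; lra.
Qed.

Definition gt (y : R) (k : nat) (x : R) := 2 * ln (Dn (S k) x y).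
Definition dgt (y : R) (k : nat) (x : R) :=
  8 * PI * INR (S k) * rho (S k) y * sin (2*PI*INR (S k)*x) / Dn (S k) x y.

Definition Kg y := 6 + 4 / (1 - sy y)^2.
Definition Kd y := 8 * PI / (1 - sy y)^3.

Lemma gt_bound y k x : 0 < y -> Rabs (gt y k x) <= Kg y * sy y ^ (S k).
Proof.
  intro hy. unfold gt, Kg. set (r := rho (S k) y). set (s := sy y).
  pose proof (Dn_bounds (S k) x y) as HD. fold r in HD.
  pose proof (Dn_pos k x y hy) as HD0.
  pose proof (rho_le k y hy) as H1. fold r s in H1.
  pose proof (rho_lt1 k y hy) as H2. fold r s in H2.
  pose proof (rho_pos (S k) y) as H3. fold r in H3.
  pose proof (sy_lt1 y hy) as H4. fold s in H4.
  pose proof (ln_le_sub1 _ HD0). pose proof (ln_ge _ HD0).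
  set (D := Dn (S k) x y) in *.
  assert (A1: ln D <= 3 * r) by nra.
  assert (A2: - (2 * r / (1-s)^2) <= ln D).
  { eapply Rle_trans; [|exact H0].
    assert (/ D <= / (1-r)^2). { apply Rinv_le_contravar; [nra|lra]. }
    assert (1 - / (1-r)^2 = - ((2*r - r^2)/(1-r)^2)) by (field; lra).
    assert ((2*r - r^2)/(1-r)^2 <= 2*r/(1-s)^2).
    { unfold Rdiv. apply Rmult_le_compat. nra. left; apply Rinv_0_lt_compat; nra. nra.
      apply Rinv_le_contravar; nra. }
    lra. }
  assert (0 <= 2*r/(1-s)^2) by (apply Rle_mult_inv_pos; nra).
  assert (2 * r / (1-s)^2 = r * (2/(1-s)^2)) by (field; lra).
  assert (0 <= 2/(1-s)^2) by (apply Rle_mult_inv_pos; nra).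
  apply Rabs_le; split; nra.
Qed.

Lemma n_pow r n : 0 <= r <= 1 -> INR n * r ^ n * (1 - r) <= 1 - r ^ n.
Proof.
  intro H. induction n. simpl; lra.
  rewrite S_INR. simpl. pose proof (pow_le r n (proj1 H)). pose proof (pow_le1 r n H).
  assert (r * (INR n * r ^ n * (1 - r)) <= r * (1 - r ^ n)) by (apply Rmult_le_compat_l; lra).
  assert (r * r ^ n * (1 - r) <= 1 - r) by (assert (r * r^n <= 1) by nra; nra). nra.
Qed.

Lemma dgt_bound y k x : 0 < y -> Rabs (dgt y k x) <= Kd y * sy y ^ (S k).
Proof.
  intro hy. unfold dgt, Kd. set (r := rho (S k) y). set (s := sy y).
  pose proof (Dn_bounds (S k) x y) as HD. fold r in HD.
  pose proof (Dn_pos k x y hy) as HD0.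
  pose proof (rho_le2 k y hy) as H1. fold r s in H1.
  pose proof (rho_lt1 k y hy) as H2. fold r s in H2.
  pose proof (rho_pos (S k) y) as H3. fold r in H3.
  pose proof (sy_lt1 y hy) as H4. fold s in H4. pose proof (sy_pos y) as H5; fold s in H5.
  set (D := Dn (S k) x y) in *.
  pose proof (n_pow s (S k) ltac:(lra)).
  pose proof (pow_le s (S k) ltac:(lra)).
  set (p := s ^ S k) in *. set (n := INR (S k)) in *.
  assert (n * r * (1 - s) <= p).
  { assert (0 <= n) by (apply pos_INR). assert (n*(1-s) >= 0) by nra.
    assert (n * r * (1 - s) <= n * (1-s) * (p*p)) by nra.
    assert (p * (n * p * (1-s)) <= p * 1) by (apply Rmult_le_compat_l; lra). nra. }
  assert ((1-s)^2 <= D) by nra.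
  pose proof PI_RGT_0.
  unfold Rdiv; rewrite Rabs_mult, Rabs_inv, (Rabs_right D) by lra; fold (Rdiv (Rabs (8 * PI * n * r * sin (2 * PI * n * x))) D).
  apply Rle_trans with (8*PI*n*r / (1-s)^2).
  { unfold Rdiv. apply Rmult_le_compat. apply Rabs_pos. left; apply Rinv_0_lt_compat; lra.
    rewrite Rabs_mult. assert (0 <= n) by (apply pos_INR).
    assert (0 <= 8*PI*n*r) by (assert (0<= 8*PI*n) by (apply Rmult_le_pos; lra); apply Rmult_le_pos; lra). rewrite (Rabs_right (8*PI*n*r)) by lra. pose proof (SIN_bound (2 * PI * n * x)).
    assert (Rabs (sin (2 * PI * n * x)) <= 1) by (apply Rabs_le; lra). nra.
    apply Rinv_le_contravar; nra. }
  assert (n * r <= p / (1 - s)). { apply (Rmult_le_reg_r (1-s)). lra. replace (p/(1-s)*(1-s)) with p by (field; lra). lra. }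
  clearbody n p D r s.
  assert (E1: 8 * PI * n * r / (1 - s) ^ 2 = 8*PI*(n*r) / (1-s)^2) by (unfold Rdiv; ring). rewrite E1.
  replace (8 * PI * / (1 - s) ^ 3 * p) with (8*PI*(p/(1-s)) / (1-s)^2) by (field; lra).
  apply Rmult_le_compat_r. left; apply Rinv_0_lt_compat; nra. apply Rmult_le_compat_l; lra.
Qed.

Definition lim_sum (u : nat -> R) : R :=
  epsilon (inhabits 0) (fun l => Un_cv (fun N => sum_f_R0 u N) l).

Lemma lim_sum_eq u l : Un_cv (fun N => sum_f_R0 u N) l -> lim_sum u = l.
Proof.
  intro H. unfold lim_sum.
  pose proof (epsilon_spec (inhabits 0) (fun l => Un_cv (fun N => sum_f_R0 u N) l) (ex_intro _ l H)).
  eapply UL_sequence; eauto.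
Qed.

Lemma geo_sum s N : 0 <= s < 1 -> sum_f_R0 (fun k => s ^ (S k)) N = s * (1 - s ^ (S N)) / (1 - s).
Proof.
  intro. induction N. simpl. field; lra.
  rewrite tech5, IHN. simpl. field; lra.
Qed.

Lemma geo_sum_le s N : 0 <= s < 1 -> sum_f_R0 (fun k => s ^ (S k)) N <= s / (1 - s).
Proof.
  intro. rewrite geo_sum by auto. unfold Rdiv. apply Rmult_le_compat_r.
  left; apply Rinv_0_lt_compat; lra. pose proof (pow_le s (S N) (proj1 H)). nra.
Qed.

Lemma geo_cv s M : 0 <= s < 1 -> 0 <= M ->
  Un_cv (fun n => sum_f_R0 (fun k => Rabs (M * s ^ (S k))) n) (M * (s / (1 - s))).
Proof.
  intros Hs HM.
  assert (E: forall n, sum_f_R0 (fun k => Rabs (M * s ^ (S k))) n = M * (s * (1 - s ^ (S n)) / (1 - s))).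
  { intro n. rewrite <- geo_sum by auto. rewrite scal_sum. apply sum_eq. intros.
    rewrite Rabs_right. ring. apply Rle_ge, Rmult_le_pos; auto. apply pow_le; lra. }
  intros eps Heps.
  assert (Hs1 : Rabs s < 1) by (rewrite Rabs_right; lra).
  destruct (pow_lt_1_zero s Hs1 (eps / (M * s / (1-s) + 1))) as [N HN].
  { apply Rdiv_lt_0_compat. lra. assert (0 <= M * s / (1-s)) by (apply Rle_mult_inv_pos; nra). lra. }
  exists N. intros n Hn. unfold Rdist. rewrite E.
  replace (M * (s * (1 - s ^ S n) / (1 - s)) - M * (s / (1 - s))) with (- (M * s / (1-s)) * s ^ S n) by (field; lra).
  rewrite Rabs_mult, Rabs_Ropp. specialize (HN (S n) ltac:(lia)).
  assert (0 <= M * s / (1-s)) by (apply Rle_mult_inv_pos; nra).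
  rewrite (Rabs_right (M * s / (1-s))) by lra.
  apply Rle_lt_trans with ((M * s / (1 - s)) * (eps / (M * s / (1 - s) + 1))).
  apply Rmult_le_compat_l; lra.
  set (A := M * s / (1 - s)) in *. clearbody A.
  apply (Rmult_lt_reg_r (A+1)). lra.
  replace (A * (eps / (A + 1)) * (A + 1)) with (A * eps) by (field; lra). nra.
Qed.

Definition cvn_of (fn : nat -> R -> R) (s M : R) (Hs : 0 <= s < 1) (HM : 0 <= M)
  (Hb : forall k x, Rabs (fn k x) <= M * s ^ (S k)) : CVN_R fn :=
  fun r => existT _ (fun k => M * s ^ (S k))
     (exist _ (M * (s / (1 - s))) (conj (geo_cv s M Hs HM) (fun n y _ => Hb n y))).

Lemma sy_range y : 0 < y -> 0 <= sy y < 1.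
Proof. intro. pose proof (sy_pos y); pose proof (sy_lt1 y H); lra. Qed.
Lemma Kg_pos y : 0 < y -> 0 <= Kg y.
Proof. intro. unfold Kg. pose proof (sy_range y H). assert (0 < (1 - sy y)^2) by nra.
  assert (0 <= 4 / (1 - sy y)^2) by (apply Rle_mult_inv_pos; lra). lra. Qed.
Lemma Kd_pos y : 0 < y -> 0 <= Kd y.
Proof. intro. unfold Kd. pose proof (sy_range y H). assert (0 < (1 - sy y)^3) by (apply pow_lt; lra).
  apply Rle_mult_inv_pos; pose proof PI_RGT_0; lra. Qed.

Definition cvn_g y (hy : 0 < y) : CVN_R (gt y) :=
  cvn_of (gt y) (sy y) (Kg y) (sy_range y hy) (Kg_pos y hy) (fun k x => gt_bound y k x hy).
Definition cvn_d y (hy : 0 < y) : CVN_R (dgt y) :=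
  cvn_of (dgt y) (sy y) (Kd y) (sy_range y hy) (Kd_pos y hy) (fun k x => dgt_bound y k x hy).

Definition Sg y x := lim_sum (fun k => gt y k x).
Definition G y x := lim_sum (fun k => dgt y k x).

Lemma SFL_eq fn cv x : SFL fn cv x = lim_sum (fun k => fn k x).
Proof.
  unfold SFL. destruct (cv x) as [l Hl]. symmetry. apply lim_sum_eq. exact Hl.
Qed.

Lemma Sg_cv y x : 0 < y -> Un_cv (fun N => sum_f_R0 (fun k => gt y k x) N) (Sg y x).
Proof.
  intro hy. destruct (CVN_R_CVS _ (cvn_g y hy) x) as [l Hl]. unfold Sg.
  rewrite (lim_sum_eq _ l Hl). exact Hl.
Qed.
Lemma G_cv y x : 0 < y -> Un_cv (fun N => sum_f_R0 (fun k => dgt y k x) N) (G y x).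
Proof.
  intro hy. destruct (CVN_R_CVS _ (cvn_d y hy) x) as [l Hl]. unfold G.
  rewrite (lim_sum_eq _ l Hl). exact Hl.
Qed.

Module DerivM.
Import Coquelicot.Coquelicot.
Lemma gt_deriv y k x : 0 < y -> derivable_pt_lim (gt y k) x (dgt y k x).
Proof.
  intro hy. apply is_derive_Reals. unfold gt, dgt, Dn.
  pose proof (Dn_pos k x y hy). unfold Dn in H.
  set (n := INR (S k)) in *. set (r := rho (S k) y) in *. clearbody n r.
  auto_derive. nra. field. nra.
Qed.
End DerivM.

Module DerivM2.
Import Coquelicot.Coquelicot.
Lemma dgt_cont y k : 0 < y -> continuity (dgt y k).
Proof.
  intros hy x. apply derivable_continuous_pt. apply ex_derive_Reals_0.
  unfold dgt, Dn. pose proof (Dn_pos k x y hy). unfold Dn in H.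
  set (n := INR (S k)) in *. set (r := rho (S k) y) in *. clearbody n r.
  auto_derive. nra.
Qed.
End DerivM2.

Lemma SP_deriv y x n : 0 < y -> derivable_pt_lim (SP (gt y) n) x (SP (dgt y) n x).
Proof.
  intro hy. induction n.
  - unfold SP; simpl. apply DerivM.gt_deriv; auto.
  - unfold SP in *; simpl.
    apply (derivable_pt_lim_plus (fun t => sum_f_R0 (fun k => gt y k t) n) (gt y (S n))); auto.
    apply DerivM.gt_deriv; auto.
Qed.

Lemma Sg_deriv y x : 0 < y -> derivable_pt_lim (Sg y) x (G y x).
Proof.
  intro hy.
  assert (Hr : 0 < Rabs x + 1) by (pose proof (Rabs_pos x); lra).
  set (r := mkposreal _ Hr).
  assert (EG : SFL (dgt y) (CVN_R_CVS _ (cvn_d y hy)) = G y).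
  { apply functional_extensionality; intro t. rewrite SFL_eq. reflexivity. }
  apply (derivable_pt_lim_CVU (SP (gt y)) (SP (dgt y)) (Sg y) (G y) x 0 r).
  - unfold Boule; simpl. rewrite Rminus_0_r. lra.
  - intros t n _. apply SP_deriv; auto.
  - intros t _. apply Sg_cv; auto.
  - rewrite <- EG. apply CVN_CVU. apply (cvn_d y hy).
  - intros t _. rewrite <- EG. apply SFL_continuity. apply (cvn_d y hy). intro n. apply DerivM2.dgt_cont; auto.
Qed.

Lemma G_cont y : 0 < y -> continuity (G y).
Proof.
  intro hy. assert (EG : SFL (dgt y) (CVN_R_CVS _ (cvn_d y hy)) = G y).
  { apply functional_extensionality; intro t. rewrite SFL_eq. reflexivity. }
  rewrite <- EG. apply SFL_continuity. apply (cvn_d y hy). intro n. apply DerivM2.dgt_cont; auto.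
Qed.

Definition wk (k : nat) (x y : R) := Csub Defs.C1 (ee (Cscal (INR (S k)) (x,y))).

Lemma mod_factor k x y : 0 < y -> Cmod (Cpow (wk k x y) 4) = exp (gt y k x).
Proof.
  intro hy. rewrite Cmod_pow. unfold wk. 
  replace (Cmod (Csub Defs.C1 (ee (Cscal (INR (S k)) (x, y)))) ^ 4) with
    ((Cmod (Csub Defs.C1 (ee (Cscal (INR (S k)) (x, y)))) ^ 2) * (Cmod (Csub Defs.C1 (ee (Cscal (INR (S k)) (x, y)))) ^ 2)) by ring.
  rewrite Cmod_w. unfold gt. replace (2 * ln (Dn (S k) x y)) with (ln (Dn (S k) x y) + ln (Dn (S k) x y)) by ring.
  rewrite exp_plus, exp_ln. auto. apply Dn_pos; auto.
Qed.

Lemma mod_partial x y N : 0 < y ->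
  Cmod (eta_partial (x,y) (S N)) = exp (sum_f_R0 (fun k => gt y k x) N).
Proof.
  intro hy. induction N.
  - change (eta_partial (x,y) 1) with (Cmul Defs.C1 (Cpow (wk 0 x y) 4)).
    rewrite Cmod_mul, Cmod_C1, mod_factor by auto. simpl. ring.
  - change (eta_partial (x,y) (S (S N))) with (Cmul (eta_partial (x,y) (S N)) (Cpow (wk (S N) x y) 4)).
    rewrite Cmod_mul, IHN, mod_factor by auto. rewrite tech5, exp_plus. auto.
Qed.

Lemma Cmod_le_sum z : Cmod z <= Rabs (Cre z) + Rabs (Cim z).
Proof.
  unfold Cmod. rewrite <- (sqrt_square (Rabs (Cre z) + Rabs (Cim z))).
  apply sqrt_le_1_alt. pose proof (Rabs_pos (Cre z)). pose proof (Rabs_pos (Cim z)).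
  assert (Cre z ^ 2 = Rabs (Cre z) ^ 2) by (rewrite <- Rsqr_pow2, <- Rsqr_pow2; apply Rsqr_abs).
  assert (Cim z ^ 2 = Rabs (Cim z) ^ 2) by (rewrite <- Rsqr_pow2, <- Rsqr_pow2; apply Rsqr_abs).
  rewrite H1, H2. nra.
  pose proof (Rabs_pos (Cre z)). pose proof (Rabs_pos (Cim z)). lra.
Qed.

Lemma real_cv (a : nat -> R) M s : 0 <= s < 1 -> 0 <= M ->
  (forall n, Rabs (a (S n) - a n) <= M * s ^ (S n)) -> exists l, Un_cv a l.
Proof.
  intros Hs HM Hb.
  set (fn := fun (n : nat) (_ : R) => a (S n) - a n).
  assert (Hb' : forall k x, Rabs (fn k x) <= M * s ^ (S k)).
  { intros k x. unfold fn. apply Hb. }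
  destruct (CVN_R_CVS fn (cvn_of fn s M Hs HM Hb') 0) as [l Hl].
  exists (a 0%nat + l). intros eps Heps. destruct (Hl eps Heps) as [N HN].
  exists (S N). intros n Hn. destruct n. lia.
  specialize (HN n ltac:(lia)).
  assert (T : forall m, SP fn m 0 = a (S m) - a 0%nat).
  { induction m. unfold SP, fn; simpl; ring. unfold SP in *. rewrite tech5, IHm. unfold fn. ring. }
  rewrite T in HN. unfold Rdist in *. replace (a (S n) - (a 0%nat + l)) with (a (S n) - a 0%nat - l) by ring. auto.
Qed.

Lemma cv_C (u : nat -> Defs.C) M s : 0 <= s < 1 -> 0 <= M ->
  (forall n, Cmod (Csub (u (S n)) (u n)) <= M * s ^ (S n)) -> exists l, Ccv u l.
Proof.
  intros Hs HM Hb.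
  destruct (real_cv (fun n => Cre (u n)) M s Hs HM) as [l1 H1].
  { intro n. eapply Rle_trans; [|apply Hb]. eapply Rle_trans; [|apply Cmod_fst]. right. reflexivity. }
  destruct (real_cv (fun n => Cim (u n)) M s Hs HM) as [l2 H2].
  { intro n. eapply Rle_trans; [|apply Hb]. eapply Rle_trans; [|apply Cmod_snd]. right. reflexivity. }
  exists (l1, l2). intros eps Heps.
  destruct (H1 (eps/2) ltac:(lra)) as [N1 HN1]. destruct (H2 (eps/2) ltac:(lra)) as [N2 HN2].
  exists (max N1 N2). intros n Hn.
  specialize (HN1 n ltac:(lia)). specialize (HN2 n ltac:(lia)). unfold Rdist in *.
  eapply Rle_lt_trans. apply Cmod_le_sum. unfold Csub, Cadd, Copp, Cre, Cim in *; simpl in *. unfold Rminus in *. lra.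
Qed.

Lemma Cmod_ee n x y : Cmod (ee (Cscal (INR n) (x,y))) = rho n y.
Proof.
  rewrite ee_val. unfold Cmod; simpl.
  pose proof (sin2_cos2 (2*PI*INR n*x)). unfold Rsqr in H.
  replace (rho n y * cos (2 * PI * INR n * x) * (rho n y * cos (2 * PI * INR n * x) * 1) +
   rho n y * sin (2 * PI * INR n * x) * (rho n y * sin (2 * PI * INR n * x) * 1)) with (rho n y * rho n y) by nra.
  apply sqrt_square. left; apply rho_pos.
Qed.

Definition Bd y := exp (Kg y * (sy y / (1 - sy y))).

Lemma Bd_ge1 y : 0 < y -> 1 <= Bd y.
Proof.
  intro hy. unfold Bd. pose proof (Kg_pos y hy). pose proof (sy_range y hy).
  assert (0 <= sy y / (1 - sy y)) by (apply Rle_mult_inv_pos; lra).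
  pose proof (exp_ineq1_le (Kg y * (sy y / (1 - sy y)))). nra.
Qed.

Lemma exp_le_mono a b : a <= b -> exp a <= exp b.
Proof. intro H. destruct H. left; apply exp_increasing; auto. subst; lra. Qed.

Lemma partial_bound x y N : 0 < y -> Cmod (eta_partial (x,y) N) <= Bd y.
Proof.
  intro hy. destruct N. simpl. rewrite Cmod_C1. apply Bd_ge1; auto.
  rewrite mod_partial by auto. unfold Bd. apply exp_le_mono.
  pose proof (sy_range y hy).
  apply Rle_trans with (sum_f_R0 (fun k => sy y ^ (S k) * Kg y) N).
  apply sum_Rle. intros. pose proof (gt_bound y n x hy). apply Rabs_le_between in H1 || idtac.
  pose proof (Rle_abs (gt y n x)). nra.
  rewrite <- scal_sum. apply Rmult_le_compat_l. apply Kg_pos; auto.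
  apply geo_sum_le; auto.
Qed.

Lemma pow4_sub1 (w : Defs.C) : Csub (Cpow w 4) Defs.C1 =
  Cmul (Csub w Defs.C1) (Cadd Defs.C1 (Cadd w (Cadd (Cmul w w) (Cmul w (Cmul w w))))).
Proof. destruct w as [a b]. unfold Csub, Cadd, Copp, Cmul, Cpow, Defs.C1, Cre, Cim; simpl. f_equal; ring. Qed.

Lemma wk_bound k x y : 0 < y -> Cmod (Csub (Cpow (wk k x y) 4) Defs.C1) <= 15 * rho (S k) y.
Proof.
  intro hy. rewrite pow4_sub1, Cmod_mul.
  assert (E : Cmod (Csub (wk k x y) Defs.C1) = rho (S k) y).
  { rewrite <- (Cmod_ee (S k) x y). rewrite <- Cmod_opp. unfold wk.
    destruct (ee (Cscal (INR (S k)) (x, y))) as [a b].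
    unfold Cmod, Csub, Cadd, Copp, Defs.C1, Cre, Cim; simpl. f_equal; ring. }
  rewrite E.
  set (m := Cmod (wk k x y)).
  assert (Hm : m <= 2).
  { pose proof (Cmod_w (S k) x y). fold (wk k x y) in H. fold m in H.
    pose proof (Dn_bounds (S k) x y). pose proof (rho_lt1 k y hy). pose proof (sy_range y hy).
    pose proof (Cmod_ge0 (wk k x y)). fold m in H3. pose proof (rho_pos (S k) y). nra. }
  assert (Hm0 : 0 <= m) by apply Cmod_ge0.
  assert (Cmod (Cadd Defs.C1 (Cadd (wk k x y) (Cadd (Cmul (wk k x y) (wk k x y)) (Cmul (wk k x y) (Cmul (wk k x y) (wk k x y)))))) <= 15).
  { eapply Rle_trans. apply Cmod_add. rewrite Cmod_C1.
    eapply Rle_trans. apply Rplus_le_compat_l. apply Cmod_add.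
    eapply Rle_trans. apply Rplus_le_compat_l, Rplus_le_compat_l. apply Cmod_add.
    rewrite !Cmod_mul. fold m. nra. }
  pose proof (rho_pos (S k) y). rewrite Rmult_comm. apply Rmult_le_compat_r; lra.
Qed.

Lemma partial_diff x y N : 0 < y ->
  Cmod (Csub (eta_partial (x,y) (S N)) (eta_partial (x,y) N)) <= (15 * Bd y) * sy y ^ (S N).
Proof.
  intro hy.
  change (eta_partial (x,y) (S N)) with (Cmul (eta_partial (x,y) N) (Cpow (wk N x y) 4)).
  replace (Csub (Cmul (eta_partial (x, y) N) (Cpow (wk N x y) 4)) (eta_partial (x, y) N)) with
    (Cmul (eta_partial (x, y) N) (Csub (Cpow (wk N x y) 4) Defs.C1)).
  2: { destruct (eta_partial (x,y) N) as [a b]; destruct (Cpow (wk N x y) 4) as [c d].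
       unfold Csub, Cadd, Copp, Cmul, Defs.C1, Cre, Cim; simpl. f_equal; ring. }
  rewrite Cmod_mul.
  pose proof (partial_bound x y N hy). pose proof (wk_bound N x y hy). pose proof (rho_le N y hy).
  pose proof (Cmod_ge0 (eta_partial (x,y) N)). pose proof (Cmod_ge0 (Csub (Cpow (wk N x y) 4) Defs.C1)).
  pose proof (Bd_ge1 y hy).
  apply Rle_trans with (Bd y * (15 * rho (S N) y)). apply Rmult_le_compat; lra. nra.
Qed.

Lemma eta_cv x y : 0 < y -> exists l, Ccv (eta_partial (x,y)) l.
Proof.
  intro hy. apply (cv_C _ (15 * Bd y) (sy y)). apply sy_range; auto.
  pose proof (Bd_ge1 y hy); lra. intro n. apply partial_diff; auto.
Qed.

Lemma Cmod_rev a b : Rabs (Cmod a - Cmod b) <= Cmod (Csub a b).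
Proof.
  assert (E1 : a = Cadd (Csub a b) b) by (destruct a, b; unfold Csub, Cadd, Copp, Cre, Cim; simpl; f_equal; ring).
  assert (E2 : b = Cadd (Copp (Csub a b)) a) by (destruct a, b; unfold Csub, Cadd, Copp, Cre, Cim; simpl; f_equal; ring).
  pose proof (Cmod_add (Csub a b) b). rewrite <- E1 in H.
  pose proof (Cmod_add (Copp (Csub a b)) a). rewrite <- E2, Cmod_opp in H0.
  apply Rabs_le; lra.
Qed.

Lemma Clim_mod x y : 0 < y -> Cmod (Clim (eta_partial (x,y))) = exp (Sg y x).
Proof.
  intro hy. destruct (eta_cv x y hy) as [l Hl].
  pose proof (epsilon_spec (inhabits C0) (fun l => Ccv (eta_partial (x,y)) l) (ex_intro _ l Hl)) as HC.
  fold (Clim (eta_partial (x,y))) in HC. set (L := Clim (eta_partial (x,y))) in *.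
  apply (UL_sequence (fun N => Cmod (eta_partial (x,y) (S N)))).
  - intros eps Heps. destruct (HC eps Heps) as [N HN]. exists N. intros n Hn.
    unfold Rdist. eapply Rle_lt_trans. apply Cmod_rev. apply HN. lia.
  - assert (E : (fun N => Cmod (eta_partial (x,y) (S N))) = (fun N => exp (sum_f_R0 (fun k => gt y k x) N))).
    { apply functional_extensionality; intro N. apply mod_partial; auto. }
    rewrite E. apply (continuity_seq exp). apply derivable_continuous_pt, derivable_pt_exp.
    apply Sg_cv; auto.
Qed.

Lemma f1_eq x y : 0 < y -> f1 x y = ln y - PI * y / 3 + Sg y x.
Proof.
  intro hy. unfold f1, eta. rewrite Cmod_scal, Cmod_mul, Clim_mod by auto.
  unfold ee. rewrite Cmod_exp. rewrite Rabs_right by lra.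
  rewrite !ln_mult by (try apply exp_pos; try lra; apply Rmult_lt_0_compat; apply exp_pos).
  rewrite !ln_exp. unfold Cmul, Cscal, Cre, Cim; simpl. field.
Qed.

Definition Xb b x y := b * G y x + (1 - b) * (G (y/2) ((x+1)/2) * / 2).

Lemma dpl_eq f x l l' : derivable_pt_lim f x l -> l = l' -> derivable_pt_lim f x l'.
Proof. intros; subst; auto. Qed.

Lemma fb_deriv b x y : 0 < y -> derivable_pt_lim (fun t => fb b t y) x (Xb b x y).
Proof.
  intro hy.
  set (c := b*(ln y - PI*y/3) + (1-b)*(ln (y/2) - PI*(y/2)/3)).
  assert (E : (fun t => fb b t y) = (fun t => c + (b * Sg y t + (1-b) * Sg (y/2) ((t+1)/2)))).
  { apply functional_extensionality; intro t. unfold fb, f0, c.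
    rewrite (f1_eq t y), (f1_eq ((t+1)/2) (y/2)) by lra. ring. }
  rewrite E.
  assert (H1 : derivable_pt_lim (fun t => b * Sg y t) x (b * G y x)).
  { apply (derivable_pt_lim_scal (Sg y)). apply Sg_deriv; auto. }
  assert (H2 : derivable_pt_lim (fun t => Sg (y/2) ((t+1)/2)) x (G (y/2) ((x+1)/2) * /2)).
  { apply (derivable_pt_lim_comp (fun t => (t+1)/2) (Sg (y/2))).
    - apply (dpl_eq _ _ ((1 + 0) * /2)). 
      apply (derivable_pt_lim_scal_right (fun t => t + 1)).
      apply (derivable_pt_lim_plus id (fun _ => 1)). apply derivable_pt_lim_id. apply derivable_pt_lim_const. ring.
    - apply Sg_deriv. lra. }
  assert (H3 : derivable_pt_lim (fun t => (1-b) * Sg (y/2) ((t+1)/2)) x ((1-b) * (G (y/2) ((x+1)/2) * /2))).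
  { apply (derivable_pt_lim_scal (fun t => Sg (y/2) ((t+1)/2))). auto. }
  apply (dpl_eq _ _ (0 + (b * G y x + (1-b) * (G (y/2) ((x+1)/2) * /2)))).
  apply (derivable_pt_lim_plus (fun _ => c)). apply derivable_pt_lim_const.
  apply (derivable_pt_lim_plus (fun t => b * Sg y t)); auto.
  unfold Xb; ring.
Qed.

Lemma cv_le (u : nat -> R) l B : Un_cv u l -> (forall n, u n <= B) -> l <= B.
Proof.
  intros H Hb. destruct (Rle_or_lt l B) as [|Hlt]; auto.
  destruct (H (l - B) ltac:(lra)) as [N HN]. specialize (HN N (Nat.le_refl _)).
  specialize (Hb N). unfold Rdist in HN. apply Rabs_def2 in HN. lra.
Qed.

Lemma exp_neg_bound t : 0 < t -> exp (- t) <= 27 / t ^ 3.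
Proof.
  intro ht. assert (E : exp t = exp (t/3) ^ 3).
  { rewrite <- exp_nat. f_equal. simpl. field. }
  pose proof (exp_ineq1_le (t/3)).
  assert ((t/3)^3 <= exp t) by (rewrite E; apply pow_incr; lra).
  rewrite exp_Ropp. apply (Rmult_le_reg_r (exp t)). apply exp_pos.
  rewrite Rinv_l by (apply Rgt_not_eq, exp_pos).
  assert (0 < t^3) by (apply pow_lt; lra).
  apply Rle_trans with (27 / t^3 * (t/3)^3). right. field. lra.
  apply Rmult_le_compat_l. apply Rle_mult_inv_pos; lra. auto.
Qed.

Lemma sin_shift n u : sin (2 * PI * INR n * (1 - u)) = - sin (2 * PI * INR n * u).
Proof.
  rewrite <- sin_neg. rewrite <- (sin_period (- (2 * PI * INR n * u)) n). f_equal. ring.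
Qed.

Definition Ey y := exp (- (PI / (4 * y))).
Definition By y := 32 * PI * Ey y / (1 - sy y) ^ 2.

Lemma dgt_upper y k u : 0 < y <= 1/10 -> 0 < u -> u <= 2 * y^2 ->
  dgt y k (1 - u) <= (32 * PI * Ey y / (1 - sy y)) * sy y ^ (S k).
Proof.
  intros hy hu hu2. pose proof PI_RGT_0 as Hpi. pose proof (sy_range y ltac:(lra)) as Hs.
  assert (HE0 : 0 < Ey y) by apply exp_pos.
  assert (Hc : 0 <= 32 * PI * Ey y / (1 - sy y)) by (apply Rle_mult_inv_pos; nra).
  pose proof (pow_le (sy y) (S k) ltac:(lra)).
  set (n := INR (S k)). assert (Hn : 1 <= n) by (unfold n; rewrite S_INR; pose proof (pos_INR k); lra).
  unfold dgt. rewrite sin_shift. fold n.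
  pose proof (Dn_pos k (1-u) y ltac:(lra)) as HD.
  set (D := Dn (S k) (1 - u) y) in *.
  pose proof (rho_pos (S k) y) as Hr.
  destruct (Rle_or_lt (n * u) (1/2)) as [Hnu | Hnu].
  - assert (0 <= sin (2 * PI * n * u)).
    { assert (0 <= n * u) by nra. apply sin_ge_0. replace (2 * PI * n * u) with (2 * PI * (n * u)) by ring. nra.
      replace (2 * PI * n * u) with (2 * PI * (n * u)) by ring. nra. }
    apply Rle_trans with 0; [|nra].
    unfold Rdiv. assert (0 <= 8 * PI * n * rho (S k) y) by (assert (0 <= 8*PI*n) by nra; nra).
    assert (0 < / D) by (apply Rinv_0_lt_compat; auto).
    assert (0 <= 8 * PI * n * rho (S k) y * sin (2 * PI * n * u)) by (apply Rmult_le_pos; lra).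
    replace (8 * PI * n * rho (S k) y * - sin (2 * PI * n * u) * / D) with (- ((8 * PI * n * rho (S k) y * sin (2 * PI * n * u)) * / D)) by ring.
    assert (0 <= (8 * PI * n * rho (S k) y * sin (2 * PI * n * u)) * / D) by (apply Rmult_le_pos; lra). lra.
  -
    set (s := sy y) in *. set (p := s ^ S k) in *.
    assert (Hrho : rho (S k) y = p * p * (s ^ (2 * S k))).
    { unfold rho, p. fold s. rewrite <- !pow_add. f_equal. lia. }
    assert (Hs2 : s ^ (2 * S k) <= Ey y).
    { unfold s, sy, Ey. rewrite <- exp_nat. apply exp_le_mono. rewrite mult_INR. fold n.
      replace (INR 2) with 2 by (simpl; ring).
      assert (1 <= 4 * y^2 * n) by nra.
      apply (Rmult_le_reg_r (4 * y)). lra.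
      replace (- (PI / (4 * y)) * (4 * y)) with (- PI) by (field; lra).
      nra. }
    assert (HEy : Ey y <= 1/2).
    { unfold Ey. eapply Rle_trans. apply exp_neg_bound. apply Rdiv_lt_0_compat; lra.
      replace (27 / (PI / (4 * y)) ^ 3) with (27 * 64 * y^3 / PI^3) by (field; lra).
      assert (27 <= PI^3) by (assert (3 <= PI) by (pose proof PI2_3_2; lra) ; nra).
      apply Rle_trans with (27 * 64 * y^3 / 27). unfold Rdiv. apply Rmult_le_compat_l. nra.
      apply Rinv_le_contravar; lra. nra. }
    pose proof (pow_le s (2 * S k) ltac:(lra)).
    assert (Hp1 : p <= 1) by (apply pow_le1; lra).
    assert (Hrho2 : rho (S k) y <= 1/2) by (rewrite Hrho; nra).
    assert (HD4 : 1/4 <= D) by (pose proof (Dn_bounds (S k) (1-u) y) as HB; fold D in HB; nra).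
    assert (Hnp : n * p * (1 - s) <= 1) by (pose proof (n_pow s (S k) ltac:(lra)) as HB; fold n p in HB; nra).
    assert (Hsin : - sin (2 * PI * n * u) <= 1) by (pose proof (SIN_bound (2 * PI * n * u)); lra).
    apply Rle_trans with (8 * PI * n * rho (S k) y * 4).
    { unfold Rdiv. assert (0 <= 8 * PI * n * rho (S k) y) by (assert (0 <= 8*PI*n) by nra; nra).
      assert (/ D <= 4) by (replace 4 with (/ (1/4)) by field; apply Rinv_le_contravar; lra).
      assert (0 < / D) by (apply Rinv_0_lt_compat; lra).
      assert (8 * PI * n * rho (S k) y * - sin (2 * PI * n * u) <= 8 * PI * n * rho (S k) y) by nra.
      replace (8 * PI * n * rho (S k) y * - sin (2 * PI * n * u) * / D) with
         ((8 * PI * n * rho (S k) y * - sin (2 * PI * n * u)) * / D) by ring.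
      apply Rle_trans with ((8 * PI * n * rho (S k) y) * / D). apply Rmult_le_compat_r; lra.
      apply Rmult_le_compat_l; lra. }
    rewrite Hrho.
    assert (n * p <= / (1 - s)) by (apply (Rmult_le_reg_r (1 - s)); [lra|]; rewrite Rinv_l by lra; lra).
    replace (32 * PI * Ey y / (1 - s) * p) with (32 * PI * (/ (1-s)) * Ey y * p) by (field; lra).
    replace (8 * PI * n * (p * p * s ^ (2 * S k)) * 4) with (32 * PI * (n * p) * s ^ (2 * S k) * p) by ring.
    apply Rmult_le_compat_r; auto.
    apply Rmult_le_compat; try nra.
    assert (0 <= n * p) by nra. nra.
Qed.

Lemma div_le a b c d : 0 <= a <= c -> 0 < d <= b -> a / b <= c / d.
Proof.
  intros. unfold Rdiv. apply Rmult_le_compat; try lra.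
  left; apply Rinv_0_lt_compat; lra. apply Rinv_le_contravar; lra.
Qed.

Lemma G_upper y u : 0 < y <= 1/10 -> 0 < u -> u <= 2 * y^2 -> G y (1 - u) <= By y.
Proof.
  intros hy hu hu2. pose proof PI_RGT_0. pose proof (sy_range y ltac:(lra)) as Hs.
  assert (HE0 : 0 < Ey y) by apply exp_pos.
  set (c := 32 * PI * Ey y / (1 - sy y)).
  assert (Hc : 0 <= c) by (apply Rle_mult_inv_pos; nra).
  apply (cv_le _ _ _ (G_cv y (1-u) ltac:(lra))). intro N.
  apply Rle_trans with (sum_f_R0 (fun k => sy y ^ (S k) * c) N).
  apply sum_Rle. intros. rewrite Rmult_comm. apply dgt_upper; auto.
  rewrite <- scal_sum. apply Rle_trans with (c * (sy y / (1 - sy y))).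
  apply Rmult_le_compat_l; auto. apply geo_sum_le; auto.
  apply Rle_trans with (c * (1 / (1 - sy y))).
  apply Rmult_le_compat_l; auto. apply div_le; lra.
  unfold By, c. right. field. lra.
Qed.

Lemma By_bound y : 0 < y <= 1/10 -> By y <= 11000 * y.
Proof.
  intro hy. pose proof PI_RGT_0. pose proof PI2_3_2. pose proof PI_4.
  pose proof (sy_range y ltac:(lra)) as Hs.
  assert (HE : Ey y <= 1728 * y^3 / PI^3).
  { unfold Ey. eapply Rle_trans. apply exp_neg_bound. apply Rdiv_lt_0_compat; lra.
    right. field. lra. }
  assert (HE0 : 0 < Ey y) by apply exp_pos.
  set (a := PI * y / 2).
  assert (Ha : 0 < a < 1) by (unfold a; nra).
  assert (Hsa : sy y * (1 + a) <= 1).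
  { unfold sy. fold a. pose proof (exp_ineq1_le a).
    replace 1 with (exp (-a) * exp a) at 2 by (rewrite <- exp_plus; replace (-a + a) with 0 by ring; apply exp_0).
    apply Rmult_le_compat_l. left; apply exp_pos. lra. }
  assert (Ea : a = PI * y / 2) by reflexivity. clearbody a.
  assert (H1s : a / 2 <= 1 - sy y) by nra.
  assert (Hm : PI^2 * y^2 / 16 <= (1 - sy y)^2).
  { replace (PI^2 * y^2 / 16) with ((a/2)^2) by (rewrite Ea; field). apply pow_incr. nra. }
  assert (0 < PI^2 * y^2 / 16) by (apply Rdiv_lt_0_compat; nra).
  unfold By. eapply Rle_trans. apply (div_le _ _ (32 * PI * (1728 * y^3 / PI^3)) (PI^2 * y^2 / 16)).
  split. nra. apply Rmult_le_compat_l; nra. lra.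
  replace (32 * PI * (1728 * y ^ 3 / PI ^ 3) / (PI ^ 2 * y ^ 2 / 16)) with (884736 * y / PI^4) by (field; lra).
  assert (81 <= PI^4) by (assert (9 <= PI^2) by nra; replace (PI^4) with (PI^2*PI^2) by ring; nra).
  apply (Rmult_le_reg_r (PI^4)). nra. unfold Rdiv. rewrite Rmult_assoc, Rinv_l by nra. nra.
Qed.

Lemma G_at1 y : G y 1 = 0.
Proof.
  unfold G. apply lim_sum_eq.
  assert (E : forall N, sum_f_R0 (fun k => dgt y k 1) N = 0).
  { assert (Z : forall k, dgt y k 1 = 0).
    { intro k. unfold dgt. rewrite Rmult_1_r.
      replace (2 * PI * INR (S k)) with (0 + 2 * INR (S k) * PI) by ring.
      rewrite sin_period, sin_0. unfold Rdiv; ring. }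
    induction N. simpl. apply Z. rewrite tech5, IHN, Z. ring. }
  intros eps Heps. exists O. intros n _. unfold Rdist. rewrite E, Rminus_0_r, Rabs_R0. lra.
Qed.

Lemma cont_eps f x0 : continuity_pt f x0 -> forall eps, 0 < eps ->
  exists a, 0 < a /\ forall x, Rabs (x - x0) < a -> Rabs (f x - f x0) < eps.
Proof.
  intros H eps Heps. unfold continuity_pt, continue_in, limit1_in, limit_in in H.
  destruct (H eps Heps) as [a [Ha Hx]]. exists a. split; auto. intros x Hxa.
  destruct (Req_dec x x0). subst. rewrite Rminus_diag, Rabs_R0; auto.
  apply (Hx x). split. split. exact I. auto. simpl. unfold Rdist. auto.
Qed.

Theorem lemma5p1 (b : R) (hb : 0 <= b <= 1) :
  (forall x y, inW x y -> exists l, derivable_pt_lim (fun t => fb b t y) x l) /\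
  (forall X : R -> R -> R,
     (forall x y, inW x y -> derivable_pt_lim (fun t => fb b t y) x (X x y)) ->
     (forall eps, eps > 0 -> exists delta, delta > 0 /\
        forall x y, inW x y -> sqrt ((x - 1) ^ 2 + y ^ 2) < delta -> X x y < eps) /\
     (forall eps delta, eps > 0 -> delta > 0 -> exists x y,
        inW x y /\ sqrt ((x - 1) ^ 2 + y ^ 2) < delta /\ X x y > - eps)).
Proof.
  split.
  { intros x y [hy _]. exists (Xb b x y). apply fb_deriv; auto. }
  intros X HX. split.
  - intros eps heps. exists (Rmin (1/10) (eps/11001)). split.
    { apply Rmin_pos; lra. }
    intros x y HW Hd.
    assert (EX : X x y = Xb b x y).
    { eapply uniqueness_limite. apply HX; auto. apply fb_deriv. apply HW. }
    rewrite EX. destruct HW as [hy [[hx0 hx1] hxy]].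
    assert (Hyd : y < Rmin (1/10) (eps/11001)).
    { eapply Rle_lt_trans; [|exact Hd]. rewrite <- (sqrt_square y) at 1 by lra.
      apply sqrt_le_1_alt. nra. }
    pose proof (Rmin_l (1/10) (eps/11001)). pose proof (Rmin_r (1/10) (eps/11001)).
    assert (Hxy2 : 1 < x^2 + y^2).
    { destruct (Rle_or_lt (x^2+y^2) 1); auto. assert (sqrt (x^2+y^2) <= 1) by (rewrite <- sqrt_1; apply sqrt_le_1_alt; auto). lra. }
    set (u := 1 - x).
    assert (Hu : 0 < u) by (unfold u; lra).
    assert (Huy : u < y^2) by (unfold u in *; nra).
    assert (E1 : x = 1 - u) by (unfold u; ring). assert (E2 : (x + 1) / 2 = 1 - u/2) by (unfold u; field).
    unfold Xb. rewrite E2, E1.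
    assert (G1 : G y (1 - u) <= 11000 * y).
    { eapply Rle_trans. apply G_upper. split; lra. lra. nra. apply By_bound; split; lra. }
    assert (G2 : G (y/2) (1 - u/2) <= 11000 * (y/2)).
    { eapply Rle_trans. apply G_upper. split; lra. lra. nra. apply By_bound; split; lra. }
    apply Rle_lt_trans with (b * (11000 * y) + (1 - b) * (11000 * (y / 2) * / 2)).
    apply Rplus_le_compat. apply Rmult_le_compat_l; lra. apply Rmult_le_compat_l. lra.
    apply Rmult_le_compat_r; lra.
    nra.
  - intros eps delta heps hdelta.
    set (y0 := Rmin (delta/2) (1/2)).
    assert (Hy0 : 0 < y0) by (apply Rmin_pos; lra).
    pose proof (Rmin_l (delta/2) (1/2)). pose proof (Rmin_r (delta/2) (1/2)). fold y0 in H, H0.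
    destruct (cont_eps (G y0) 1 (G_cont y0 Hy0 1) (eps/2) ltac:(lra)) as [a1 [Ha1 Hc1]].
    destruct (cont_eps (G (y0/2)) 1 (G_cont (y0/2) ltac:(lra) 1) (eps/2) ltac:(lra)) as [a2 [Ha2 Hc2]].
    rewrite G_at1 in Hc1, Hc2.
    set (u := Rmin (Rmin a1 a2 / 2) (y0^2/4)).
    assert (Hu0 : 0 < u) by (apply Rmin_pos; [apply Rdiv_lt_0_compat; [apply Rmin_pos|]; lra | nra]).
    pose proof (Rmin_l (Rmin a1 a2 / 2) (y0^2/4)). pose proof (Rmin_r (Rmin a1 a2 / 2) (y0^2/4)). fold u in H1, H2.
    pose proof (Rmin_l a1 a2). pose proof (Rmin_r a1 a2).
    assert (HW : inW (1 - u) y0).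
    { split; auto. split. split; nra.
      assert (1 < (1-u)^2 + y0^2) by nra.
      pose proof (sqrt_lt_1_alt 1 ((1-u)^2+y0^2) ltac:(lra)) as Hs. rewrite sqrt_1 in Hs. lra. }
    exists (1 - u), y0. split; auto. split.
    + rewrite <- (sqrt_square delta) by lra. apply sqrt_lt_1_alt. split. nra.
      replace (1 - u - 1) with (- u) by ring. assert (u <= y0 / 2) by nra. assert (y0 * y0 <= delta * delta / 4) by nra. nra.
    + assert (EX : X (1 - u) y0 = Xb b (1 - u) y0).
      { eapply uniqueness_limite. apply HX; auto. apply fb_deriv. lra. }
      rewrite EX. unfold Xb.
      replace ((1 - u + 1) / 2) with (1 - u/2) by field.
      specialize (Hc1 (1 - u) ltac:(rewrite Rabs_left; lra)).
      specialize (Hc2 (1 - u/2) ltac:(rewrite Rabs_left; lra)).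
      rewrite Rminus_0_r in Hc1, Hc2. apply Rabs_def2 in Hc1. apply Rabs_def2 in Hc2.
      destruct Hc1, Hc2.
      assert (b * G y0 (1 - u) >= b * (- (eps/2))) by (apply Rle_ge, Rmult_le_compat_l; lra).
      assert ((1 - b) * (G (y0 / 2) (1 - u / 2) * / 2) >= (1-b) * (- (eps/2) * /2)).
      { apply Rle_ge, Rmult_le_compat_l. lra. apply Rmult_le_compat_r; lra. }
      nra.
Qed.
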